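(* Let $E$ be a symmetric operator defined on a dense domain $\mathcal D$ of a Hilbert space $\mathcal H$, and let $I$ be a countable index set. Let $\{d_i\}_{i\in I}$ and $\{\tilde d_i\}_{i\in I}$ be two sequences of real numbers such that: (i) $\{I_j\}_{j\in J}$ is a collection of pairwise disjoint finite subsets of $I$; (ii) $\{d_i\}_{i\in I_j}\preccurlyeq\{\tilde d_i\}_{i\in I_j}$ for each $j\in J$; (iii) $\tilde d_i=d_i$ for all $i\in I\setminus\bigcup_{j\in J}I_j$. Suppose that $\{f_i\}_{i\in I}\subset\mathcal D$ is an orthonormal sequence with $\langle Ef_i,f_i\rangle=\tilde d_i$ for all $i\in I$. Then there exists an orthonormal sequence $\{e_i\}_{i\in I}$ such that each $e_k$ lies in the (algebraic) linear span of $\{f_i\}_{i\in I}$, $\overline{\operatorname{span}}\{e_i\}_{i\in I}=\overline{\operatorname{span}}\{f_i\}_{i\in I}$, and $\langle Ee_i,e_i\rangle=d_i$ for all $i\in I$.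
   Context: $E$ symmetric means $\langle Ef,g\rangle=\langle f,Eg\rangle$ for all $f,g\in\mathcal D$. For finite real sequences $\{a_i\}_{i=1}^N$, $\{b_i\}_{i=1}^N$ with decreasing rearrangements $\{a_i^\downarrow\}$, $\{b_i^\downarrow\}$, the majorization $\{a_i\}\preccurlyeq\{b_i\}$ means $\sum_{i=1}^N a_i^\downarrow=\sum_{i=1}^N b_i^\downarrow$ and $\sum_{i=1}^n a_i^\downarrow\le\sum_{i=1}^n b_i^\downarrow$ for all $1\le n\le N$ (for a finite index set, apply this after any enumeration). $\overline{\operatorname{span}}$ is the closed linear span. *)

(* Defs.v *)
From HB Require Import structures.
From mathcomp Require Import all_boot all_order all_algebra.
From mathcomp Require Import finmap.
From mathcomp Require Import reals.
From mathcomp Require Import complex.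
Set Implicit Arguments. Unset Strict Implicit. Unset Printing Implicit Defensive.
Import Order.TTheory GRing.Theory Num.Theory.
Local Open Scope ring_scope.
Local Open Scope complex_scope.

Section Hilbert.
Variables (R : realType) (V : lmodType R[i]) (ip : V -> V -> R[i]).

Definition is_inner_product : Prop :=
  [/\ forall (a : R[i]) (x y z : V), ip (a *: x + y) z = a * ip x z + ip y z,
      forall x y : V, ip y x = (ip x y)^*,
      forall x : V, 0 <= ip x x
    & forall x : V, ip x x = 0 -> x = 0].

Definition hnorm (x : V) : R := Num.sqrt (complex.Re (ip x x)).

Definition hcomplete : Prop :=
  forall u : nat -> V,
    (forall eps : R, 0 < eps -> exists N : nat, forall m n : nat,
        (N <= m)%N -> (N <= n)%N -> hnorm (u m - u n) < eps) ->
    exists l : V, forall eps : R, 0 < eps -> exists N : nat, forall n : nat,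
        (N <= n)%N -> hnorm (u n - l) < eps.

Definition is_hilbert : Prop := is_inner_product /\ hcomplete.

Definition hclosure (A : V -> Prop) (x : V) : Prop :=
  forall eps : R, 0 < eps -> exists y : V, A y /\ hnorm (x - y) < eps.

Definition dense (A : V -> Prop) : Prop := forall x : V, hclosure A x.

Definition is_subspace (A : V -> Prop) : Prop :=
  A 0 /\ forall (a : R[i]) (x y : V), A x -> A y -> A (a *: x + y).

Definition linear_on (D : V -> Prop) (E : V -> V) : Prop :=
  forall (a : R[i]) (x y : V), D x -> D y -> E (a *: x + y) = a *: E x + E y.

Definition symmetric_operator (D : V -> Prop) (E : V -> V) : Prop :=
  [/\ is_subspace D, dense D, linear_on D E
    & forall f g : V, D f -> D g -> ip (E f) g = ip f (E g)].

Definition orthonormal_fam (I : eqType) (f : I -> V) : Prop :=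
  forall i k : I, ip (f i) (f k) = if i == k then 1 else 0.

Definition lspan (I : Type) (f : I -> V) (x : V) : Prop :=
  exists (s : seq I) (c : I -> R[i]), x = \sum_(i <- s) c i *: f i.

Definition cspan (I : Type) (f : I -> V) : V -> Prop := hclosure (lspan f).

End Hilbert.

Definition majorized (R : realDomainType) (a b : seq R) : Prop :=
  let a' := sort >=%R a in let b' := sort >=%R b in
  [/\ size a = size b,
      \sum_(x <- a') x = \sum_(x <- b') x
    & forall n : nat, (1 <= n <= size a)%N ->
        \sum_(x <- take n a') x <= \sum_(x <- take n b') x].

(* Main.v *)
Require Import Defs.
From HB Require Import structures.
From mathcomp Require Import all_boot all_order all_algebra.
From mathcomp Require Import finmap.
From mathcomp Require Import reals.
From mathcomp Require Import complex.
From mathcomp Require Import ring lra.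
From Stdlib Require Import Classical ClassicalEpsilon.
Set Implicit Arguments. Unset Strict Implicit. Unset Printing Implicit Defensive.
Import Order.TTheory GRing.Theory Num.Theory.
Local Open Scope ring_scope.
Local Open Scope complex_scope.

Section Hil.
Variables (R : realType) (V : lmodType R[i]) (ip : V -> V -> R[i]).
Hypothesis Hip : is_inner_product ip.

Lemma conjD (a b : R[i]) : conjc (a + b) = conjc a + conjc b.
Proof. by case: a => ? ?; case: b => ? ?; simpc. Qed.
Lemma conjM (a b : R[i]) : conjc (a * b) = conjc a * conjc b.
Proof. by case: a => ? ?; case: b => ? ?; simpc. Qed.

Lemma ipDZl a x y z : ip (a *: x + y) z = a * ip x z + ip y z.
Proof. by case: Hip. Qed.
Lemma ipC x y : ip y x = conjc (ip x y).
Proof. by case: Hip. Qed.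
Lemma ip0l z : ip 0 z = 0.
Proof.
have := ipDZl 1 0 0 z; rewrite scaler0 addr0 mul1r => /eqP.
by rewrite -subr_eq subrr eq_sym => /eqP.
Qed.
Lemma ipDl x y z : ip (x + y) z = ip x z + ip y z.
Proof. by rewrite -[x]scale1r ipDZl mul1r scale1r. Qed.
Lemma ipZl a x z : ip (a *: x) z = a * ip x z.
Proof. by rewrite -[a *: x]addr0 ipDZl ip0l addr0. Qed.
Lemma ipNl x z : ip (- x) z = - ip x z.
Proof. by rewrite -scaleN1r ipZl mulN1r. Qed.
Lemma ipBl x y z : ip (x - y) z = ip x z - ip y z.
Proof. by rewrite ipDl ipNl. Qed.
Lemma ipDr x y z : ip z (x + y) = ip z x + ip z y.
Proof. by rewrite ipC ipDl conjD -!ipC. Qed.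
Lemma ipZr a x z : ip z (a *: x) = conjc a * ip z x.
Proof. by rewrite ipC ipZl conjM -!ipC. Qed.
Lemma ip0r z : ip z 0 = 0.
Proof. by rewrite ipC ip0l conjc0. Qed.
Lemma ip_suml (I : Type) (s : seq I) (F : I -> V) z :
  ip (\sum_(i <- s) F i) z = \sum_(i <- s) ip (F i) z.
Proof.
elim: s => [|a s IH]; first by rewrite !big_nil ip0l.
by rewrite !big_cons ipDl IH.
Qed.
Lemma ip_sumr (I : Type) (s : seq I) (F : I -> V) z :
  ip z (\sum_(i <- s) F i) = \sum_(i <- s) ip z (F i).
Proof.
elim: s => [|a s IH]; first by rewrite !big_nil ip0r.
by rewrite !big_cons ipDr IH.
Qed.
End Hil.
Section Om.
Variable R : realType.
Definition omega (z : R[i]) : R[i] :=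
  if z == 0 then 1 else
  let r := Num.sqrt (complex.Re z ^+ 2 + complex.Im z ^+ 2) in
  (complex.Im z / r) +i* (complex.Re z / r).

Lemma omegaK (z : R[i]) : omega z * conjc (omega z) = 1.
Proof.
rewrite /omega; case: eqP => [_|]; first by rewrite mul1r; simpc.
case: z => za zb /= Hz.
set r := Num.sqrt _.
have r2 : r ^+ 2 = za ^+ 2 + zb ^+ 2.
  by rewrite sqr_sqrtr // addr_ge0 // sqr_ge0.
have rn0 : r != 0.
  apply/eqP => r0; apply: Hz.
  move: r2; rewrite r0 expr0n /= => /eqP; rewrite eq_sym paddr_eq0 ?sqr_ge0 //.
  by rewrite !sqrf_eq0 => /andP[/eqP-> /eqP->].
simpc; congr (_ +i* _).
  rewrite -!expr2 -[_ + _ ^+ 2]/(_ + _).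
  have -> : (zb / r) ^+ 2 + (za / r) ^+ 2 = (za ^+ 2 + zb ^+ 2) / r ^+ 2.
    by field.
  by rewrite -r2 divff // expf_neq0.
by ring.
Qed.

Lemma omegaRe (z : R[i]) : omega z * z + conjc (omega z * z) = 0.
Proof.
rewrite /omega; case: eqP => [->|]; first by rewrite mulr0; simpc.
case: z => za zb /= Hz.
set r := Num.sqrt _.
by simpc; congr (_ +i* _); ring.
Qed.
End Om.

Section Op.
Variables (R : realType) (V : lmodType R[i]) (ip : V -> V -> R[i]).
Hypothesis Hip : is_inner_product ip.
Variables (D : V -> Prop) (E : V -> V).
Hypothesis HE : symmetric_operator ip D E.

Lemma D0 : D 0. Proof. by case: HE => -[]. Qed.
Lemma DDZ a x y : D x -> D y -> D (a *: x + y).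
Proof. by case: HE => -[_ H] _ _ _; apply: H. Qed.
Lemma DZ a x : D x -> D (a *: x).
Proof. by move=> Dx; rewrite -[_ *: _]addr0; apply: DDZ => //; apply: D0. Qed.
Lemma DD x y : D x -> D y -> D (x + y).
Proof. by move=> Dx Dy; have := DDZ 1 Dx Dy; rewrite !scale1r. Qed.
Lemma ElinDZ a x y : D x -> D y -> E (a *: x + y) = a *: E x + E y.
Proof. by case: HE => _ _ H _; apply: H. Qed.
Lemma E0 : E 0 = 0.
Proof.
have := ElinDZ 1 D0 D0; rewrite scaler0 addr0 scale1r => /eqP.
by rewrite -subr_eq subrr eq_sym => /eqP.
Qed.
Lemma EZ a x : D x -> E (a *: x) = a *: E x.
Proof. by move=> Dx; rewrite -[_ *: x]addr0 ElinDZ ?E0 ?addr0 //; apply: D0. Qed.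
Lemma ED x y : D x -> D y -> E (x + y) = E x + E y.
Proof. by move=> Dx Dy; have := ElinDZ 1 Dx Dy; rewrite !scale1r. Qed.
Lemma Esym f g : D f -> D g -> ip (E f) g = ip f (E g).
Proof. by case: HE => _ _ _ H; apply: H. Qed.

Lemma E2 a b u1 u2 : D u1 -> D u2 -> E (a *: u1 + b *: u2) = a *: E u1 + b *: E u2.
Proof. by move=> D1 D2; rewrite ElinDZ ?EZ //; apply: DZ. Qed.

Lemma ip2 u1 u2 a b c d : ip u1 u1 = 1 -> ip u2 u2 = 1 -> ip u1 u2 = 0 ->
  ip (a *: u1 + b *: u2) (c *: u1 + d *: u2) = a * conjc c + b * conjc d.
Proof.
move=> H11 H22 H12.
have H21 : ip u2 u1 = 0 by rewrite (ipC Hip) H12 conjc0.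
rewrite !(ipDl Hip) !(ipZl Hip) !(ipDr Hip) !(ipZr Hip) H11 H22 H12 H21.
ring.
Qed.

Lemma ipE2 u1 u2 a b : D u1 -> D u2 -> ip u1 u1 = 1 -> ip u2 u2 = 1 -> ip u1 u2 = 0 ->
  ip (E (a *: u1 + b *: u2)) (a *: u1 + b *: u2) =
   a * conjc a * ip (E u1) u1 + a * conjc b * conjc (ip (E u2) u1)
   + b * conjc a * ip (E u2) u1 + b * conjc b * ip (E u2) u2.
Proof.
move=> D1 D2 H11 H22 H12.
have H12' : ip (E u1) u2 = conjc (ip (E u2) u1).
  by rewrite Esym // -(ipC Hip).
rewrite E2 // !(ipDl Hip) !(ipZl Hip) !(ipDr Hip) !(ipZr Hip) H12'.
ring.
Qed.

Lemma conjN (x : R[i]) : conjc (- x) = - conjc x.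
Proof. by case: x => ? ?; simpc. Qed.
Lemma conjc_idem (x : R[i]) : conjc (conjc x) = x.
Proof. by case: x => ? ?; simpc. Qed.

Lemma rotation u1 u2 (a b tau : R) :
  ip u1 u1 = 1 -> ip u2 u2 = 1 -> ip u1 u2 = 0 -> D u1 -> D u2 ->
  ip (E u1) u1 = a%:C -> ip (E u2) u2 = b%:C -> 0 <= tau -> tau <= 1 ->
  exists al be ga de al' be' ga' de' : R[i],
   [/\ [/\ ip (al *: u1 + be *: u2) (al *: u1 + be *: u2) = 1,
       ip (ga *: u1 + de *: u2) (ga *: u1 + de *: u2) = 1 &
       ip (al *: u1 + be *: u2) (ga *: u1 + de *: u2) = 0],
       ip (E (al *: u1 + be *: u2)) (al *: u1 + be *: u2) = (tau * a + (1 - tau) * b)%:C,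
       ip (E (ga *: u1 + de *: u2)) (ga *: u1 + de *: u2) = ((1 - tau) * a + tau * b)%:C
     , u1 = al' *: (al *: u1 + be *: u2) + be' *: (ga *: u1 + de *: u2)
     & u2 = ga' *: (al *: u1 + be *: u2) + de' *: (ga *: u1 + de *: u2)].
Proof.
move=> H11 H22 H12 D1 D2 Ha Hb t0 t1.
set z := ip (E u2) u1.
set w := omega z.
set c : R[i] := (Num.sqrt tau)%:C.
set s : R[i] := (Num.sqrt (1 - tau))%:C.
have cc : conjc c = c by rewrite conjc_real.
have cs : conjc s = s by rewrite conjc_real.
have c2 : c * c = tau%:C by rewrite -rmorphM -expr2 sqr_sqrtr.
have s2 : s * s = (1 - tau)%:C by rewrite -rmorphM -expr2 sqr_sqrtr // subr_ge0.
have wK : w * conjc w = 1 by apply: omegaK.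
have wR : conjc w * conjc z = - (w * z).
  by apply/eqP; rewrite -conjM -addr_eq0 addrC omegaRe.
exists c, (s * w), (- s), (c * w), c, (- s), (conjc w * s), (conjc w * c).
split; first split.
- rewrite ip2 // !conjM cc cs.
  transitivity (c * c + s * s * (w * conjc w)); first by ring.
  by rewrite wK c2 s2 mulr1 -rmorphD addrC subrK.
- rewrite ip2 // !conjM conjN cc cs.
  transitivity (s * s + c * c * (w * conjc w)); first by ring.
  by rewrite wK c2 s2 mulr1 -rmorphD subrK.
- rewrite ip2 // !conjM conjN cc cs.
  transitivity (- (c * s) + c * s * (w * conjc w)); first by ring.
  by rewrite wK mulr1 addNr.
- rewrite ipE2 // !conjM cc cs Ha Hb -/z.
  transitivity (c * c * a%:C + c * s * (conjc w * conjc z + w * z) + s * s * (w * conjc w) * b%:C); first by ring.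
  by rewrite wR addNr mulr0 addr0 wK mulr1 c2 s2 -!rmorphM -rmorphD.
- rewrite ipE2 // !conjM conjN cc cs Ha Hb -/z.
  transitivity (s * s * a%:C - c * s * (conjc w * conjc z + w * z) + c * c * (w * conjc w) * b%:C); first by ring.
  by rewrite wR addNr mulr0 subr0 wK mulr1 c2 s2 -!rmorphM -rmorphD.
- rewrite !scalerDr !scalerA addrACA -!scalerDl.
  have -> : c * c + - s * - s = 1 by rewrite mulrNN c2 s2 -rmorphD addrC subrK.
  have -> : c * (s * w) + - s * (c * w) = 0 by ring.
  by rewrite scale1r scale0r addr0.
- rewrite !scalerDr !scalerA addrACA -!scalerDl.
  have -> : conjc w * s * c + conjc w * c * - s = 0 by ring.
  have -> : conjc w * s * (s * w) + conjc w * c * (c * w) = 1.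
    transitivity ((s * s + c * c) * (w * conjc w)); first by ring.
    by rewrite wK mulr1 c2 s2 -rmorphD subrK.
  by rewrite scale1r scale0r add0r.
Qed.
End Op.

Section Spans.
Variables (R : realType) (V : lmodType R[i]) (I : eqType).
Implicit Types (g h : I -> V) (s : seq I).

Definition inspan g s (x : V) := exists c : I -> R[i], x = \sum_(k <- s) c k *: g k.

Lemma sum_delta (W : zmodType) s k (F : I -> W) : uniq s -> k \in s ->
  \sum_(i <- s) (if i == k then F i else 0) = F k.
Proof.
move=> us ks; rewrite (big_rem k) //= eqxx big1_seq ?addr0 //.
move=> i /andP[_ ir]; case: eqP => // ik; move: ir; rewrite ik.
by rewrite mem_rem_uniqF.
Qed.

Lemma sum_delta0 (W : zmodType) s k (F : I -> W) : k \notin s ->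
  \sum_(i <- s) (if i == k then F i else 0) = 0.
Proof.
move=> ks; rewrite big1_seq // => i /andP[_ ir]; case: eqP => // ik.
by move: ks; rewrite -ik ir.
Qed.

Lemma inspan_self g s k : uniq s -> k \in s -> inspan g s (g k).
Proof.
move=> us ks; exists (fun i => if i == k then 1 else 0).
rewrite -(sum_delta g us ks); apply: eq_bigr => i _.
by case: eqP => _; rewrite ?scale1r ?scale0r.
Qed.

Lemma inspan_lin g s a x y : inspan g s x -> inspan g s y -> inspan g s (a *: x + y).
Proof.
move=> [c ->] [c' ->]; exists (fun k => a * c k + c' k).
rewrite scaler_sumr -big_split /=; apply: eq_bigr => k _.
by rewrite scalerDl scalerA.
Qed.

Lemma inspan0 g s : inspan g s 0.
Proof. by exists (fun _ => 0); rewrite big1 // => k _; rewrite scale0r. Qed.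

Lemma inspanZ g s a x : inspan g s x -> inspan g s (a *: x).
Proof. by move=> H; rewrite -[_ *: x]addr0; apply: inspan_lin => //; apply: inspan0. Qed.

Lemma inspanD g s x y : inspan g s x -> inspan g s y -> inspan g s (x + y).
Proof. by move=> Hx Hy; rewrite -[x]scale1r; apply: inspan_lin. Qed.

Lemma inspan2 g s a b x y : inspan g s x -> inspan g s y -> inspan g s (a *: x + b *: y).
Proof. by move=> Hx Hy; apply: inspan_lin => //; apply: inspanZ. Qed.

Lemma inspan_trans g h s s2 x : (forall k, k \in s2 -> inspan g s (h k)) ->
  inspan h s2 x -> inspan g s x.
Proof.
move=> Hh [c ->]; elim: s2 Hh => [|a r IH] Hh; first by rewrite big_nil; apply: inspan0.
rewrite big_cons; apply: inspan_lin; first by apply: Hh; rewrite inE eqxx.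
by apply: IH => k kr; apply: Hh; rewrite inE kr orbT.
Qed.

Lemma inspan_rem g s m x : uniq s -> m \in s -> inspan g (rem m s) x -> inspan g s x.
Proof.
move=> us ms [c ->]; exists (fun i => if i == m then 0 else c i).
rewrite [RHS](big_rem m) //= eqxx scale0r add0r; apply: eq_big_seq => i.
by rewrite mem_rem_uniq // inE => /andP[/negbTE ->].
Qed.

Lemma inspan_ind (P : V -> Prop) g s x : P 0 -> (forall a y z, P y -> P z -> P (a *: y + z)) ->
  (forall k, k \in s -> P (g k)) -> inspan g s x -> P x.
Proof.
move=> P0 PL Pg [c ->]; elim: s Pg => [|a r IH] Pg; first by rewrite big_nil.
rewrite big_cons; apply: PL; first by apply: Pg; rewrite inE eqxx.
by apply: IH => k kr; apply: Pg; rewrite inE kr orbT.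
Qed.

End Spans.

Section Comb.
Variables (R : realType) (I : eqType).
Implicit Types (s : seq I) (d t : I -> R).

Definition pos (x : R) := if 0 <= x then x else 0.
Lemma pos_ge0 x : 0 <= pos x. Proof. by rewrite /pos; case: ifP => // /negbT; rewrite -ltNge => /ltW. Qed.
Lemma pos_ge x : x <= pos x. Proof. by rewrite /pos; case: ifP => // /negbT; rewrite -ltNge => /ltW. Qed.
Lemma pos_id x : 0 <= x -> pos x = x. Proof. by rewrite /pos => ->. Qed.
Lemma pos_0 x : x <= 0 -> pos x = 0.
Proof. by rewrite /pos => H; case: ifP => // H'; apply/eqP; rewrite eq_le H H'. Qed.

Definition Hmaj s d t := \sum_(i <- s) d i = \sum_(i <- s) t i /\
  forall c : R, \sum_(i <- s) pos (d i - c) <= \sum_(i <- s) pos (t i - c).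

Lemma sum_if_count s (P : pred I) (x : R) :
  \sum_(i <- s) (if P i then x else 0) = (count P s)%:R * x.
Proof.
elim: s => [|a s IH]; first by rewrite big_nil mul0r.
rewrite big_cons IH /=; case: (P a); rewrite /= ?add0n ?add0r //.
by rewrite natrD mulrDl mul1r.
Qed.

Lemma ler_sum_seq s (F G : I -> R) : (forall i, i \in s -> F i <= G i) ->
  \sum_(i <- s) F i <= \sum_(i <- s) G i.
Proof.
elim: s => [|a s IH] H; first by rewrite !big_nil.
rewrite !big_cons; apply: lerD; first by apply: H; rewrite inE eqxx.
by apply: IH => i ir; apply: H; rewrite inE ir orbT.
Qed.

Lemma sum_pos_ge0 s F : 0 <= \sum_(i <- s) pos (F i).
Proof. by apply: sumr_ge0 => i _; apply: pos_ge0. Qed.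

Lemma exists_argmin s (P : pred I) (F : I -> R) : (exists x, x \in s /\ P x) ->
  exists x, [/\ x \in s, P x & forall y, y \in s -> P y -> F x <= F y].
Proof.
elim: s => [|a s IH]; first by case=> x [].
case=> x []; rewrite inE => /orP[/eqP -> Pa|xs Px].
  case: (boolP (has P s)) => [/hasP [y ys Py]|hn].
    have [z [zs Pz Hz]] := IH (ex_intro _ y (conj ys Py)).
    case: (leP (F a) (F z)) => [aF|aF].
      exists a; split; rewrite ?inE ?eqxx // => w; rewrite inE => /orP[/eqP->//|ws Pw].
      by apply: le_trans aF (Hz _ ws Pw).
    exists z; split; rewrite ?inE ?zs ?orbT // => w; rewrite inE => /orP[/eqP->|ws Pw].
      by move=> _; apply: ltW.
    by apply: Hz.
  exists a; split; rewrite ?inE ?eqxx // => w; rewrite inE => /orP[/eqP->//|ws Pw].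
  by move: hn => /hasPn /(_ _ ws); rewrite Pw.
have [z [zs Pz Hz]] := IH (ex_intro _ x (conj xs Px)).
case: (boolP (P a)) => Pa.
  case: (leP (F a) (F z)) => [aF|aF].
    exists a; split; rewrite ?inE ?eqxx // => w; rewrite inE => /orP[/eqP->//|ws Pw].
    by apply: le_trans aF (Hz _ ws Pw).
  exists z; split; rewrite ?inE ?zs ?orbT // => w; rewrite inE => /orP[/eqP->|ws Pw].
    by move=> _; apply: ltW.
  by apply: Hz.
exists z; split; rewrite ?inE ?zs ?orbT // => w; rewrite inE => /orP[/eqP->|ws Pw].
  by rewrite (negbTE Pa).
by apply: Hz.
Qed.

Lemma exists_argmax s (P : pred I) (F : I -> R) : (exists x, x \in s /\ P x) ->
  exists x, [/\ x \in s, P x & forall y, y \in s -> P y -> F y <= F x].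
Proof.
move=> H; have [x [xs Px Hx]] := exists_argmin (fun i => - F i) H.
by exists x; split => // y ys Py; rewrite -lerN2; apply: Hx.
Qed.

Lemma residual s m q d t : uniq s -> m \in s -> q \in s -> m != q -> Hmaj s d t ->
  (forall i, i \in s -> d i <= d m) -> t q <= d m -> d m <= t m ->
  (forall j, j \in s -> j != m -> j != q -> t m <= t j \/ t j <= t q) ->
  Hmaj (rem m s) d (fun j => if j == q then t m + t q - d m else t j).
Proof.
move=> us ms qs mq [Hs Hh] dmax tq tm gap.
set s1 := rem m s; set s2 := rem q s1.
have u1 : uniq s1 by apply: rem_uniq.
have qs1 : q \in s1 by rewrite mem_rem_uniq // inE eq_sym mq.
have in1 j : j \in s1 -> j != m /\ j \in s.
  by rewrite mem_rem_uniq // inE => /andP[].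
have in2 j : j \in s2 -> [/\ j != q, j != m & j \in s].
  by rewrite mem_rem_uniq // inE => /andP[jq /in1 []].
have eqs2 (F : R -> R) : \sum_(j <- s2) (F (if j == q then t m + t q - d m else t j))
     = \sum_(j <- s2) F (t j).
  by apply: eq_big_seq => j /in2 [/negbTE -> _ _].
have splitS (F : I -> R) : \sum_(i <- s) F i = F m + \sum_(i <- s1) F i by rewrite (big_rem m).
have splitS1 (F : I -> R) : \sum_(i <- s1) F i = F q + \sum_(i <- s2) F i by rewrite (big_rem q).
split.
  rewrite [RHS]splitS1 eqxx (eqs2 id) /=.
  move: Hs; rewrite splitS (splitS t) (splitS1 t) => Hs; lra.
move=> c.
rewrite [X in _ <= X]splitS1 eqxx (eqs2 (fun x => pos (x - c))) /=.
set x := t m + t q - d m.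
set L := \sum_(i <- s1) pos (d i - c).
set T2 := \sum_(i <- s2) pos (t i - c).
have T2ge0 : 0 <= T2 by apply: sum_pos_ge0.
have Hc := Hh c; rewrite (splitS (fun i => pos (d i - c))) (splitS (fun i => pos (t i - c))) (splitS1 (fun i => pos (t i - c))) -/L -/T2 in Hc.
case: (leP (d m) c) => [dmc|cdm].
  have -> : L = 0.
    rewrite /L big1_seq // => i /andP[_ /in1 [_ /dmax]] di; apply: pos_0; lra.
  by apply: addr_ge0 => //; apply: pos_ge0.
case: (leP c (t q)) => [ctq|tqc].
  move: Hc; rewrite (pos_id (x := d m - c)) ?(pos_id (x := t m - c)) ?(pos_id (x := t q - c));
   try lra.
  have := pos_ge (x - c); rewrite /x; lra.
pose K := count (fun i => c < d i) s1.
pose h := count (fun j => t m <= t j) s2.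
have F1 : h%:R * (d m - c) <= T2.
  rewrite -sum_if_count /T2; apply: ler_sum_seq => j /in2 [jq jm js].
  case: ifP => Hj; last by apply: pos_ge0.
  rewrite pos_id; lra.
have F2 : \sum_(j <- s2) pos (t j - t q) = T2 + h%:R * (c - t q).
  rewrite -sum_if_count /T2 -big_split /=; apply: eq_big_seq => j /in2 [jq jm js].
  case: ifP => Hj.
    rewrite !pos_id; lra.
  have [/= Hj'|Hj'] := gap j js jm jq; first by rewrite Hj' in Hj.
  by rewrite !pos_0 ?addr0; lra.
have F3 : L <= K%:R * (d m - c).
  rewrite -sum_if_count /L; apply: ler_sum_seq => i /in1 [_ /dmax] di.
  case: ifP => Hi; first by rewrite pos_id; lra.
  rewrite pos_0 //; move/negbT: Hi; rewrite -leNgt; lra.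
have F4 : L + K%:R * (c - t q) <= \sum_(i <- s1) pos (d i - t q).
  rewrite -sum_if_count /L -big_split /=; apply: ler_sum_seq => i _.
  case: ifP => Hi.
    rewrite !pos_id; lra.
  rewrite addr0 (pos_0 (x := d i - c)); first exact: pos_ge0.
  by move/negbT: Hi; rewrite -leNgt; lra.
have Hq := Hh (t q); rewrite (splitS (fun i => pos (d i - t q))) (splitS (fun i => pos (t i - t q))) (splitS1 (fun i => pos (t i - t q))) F2 in Hq.
rewrite subrr (pos_id (x := 0)) // (pos_id (x := d m - t q)) ?(pos_id (x := t m - t q)) in Hq;
  try lra.
case: (leqP K h) => Kh.
  have : K%:R * (d m - c) <= h%:R * (d m - c) by apply: ler_wpM2r; [lra | rewrite ler_nat].
  have := pos_ge0 (x - c); lra.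
have : h.+1%:R * (c - t q) <= K%:R * (c - t q) by apply: ler_wpM2r; [lra | rewrite ler_nat].
rewrite -addn1 natrD mulrDl mul1r.
have := pos_ge (x - c); rewrite /x; lra.
Qed.
End Comb.

Section Comb2.
Variables (R : realType) (I : eqType).
Implicit Types (s : seq I) (d t : I -> R).

Definition swp (m p i : I) := if i == m then p else if i == p then m else i.

Lemma swpK m p : involutive (swp m p).
Proof.
move=> i; rewrite /swp.
case: (eqVneq i m) => [->|im]; first by rewrite eqxx; case: eqP.
case: (eqVneq i p) => [->|ip]; first by rewrite eqxx.
by rewrite (negbTE im) (negbTE ip).
Qed.

Lemma swp_id m p i : i != m -> i != p -> swp m p i = i.
Proof. by rewrite /swp => /negbTE -> /negbTE ->. Qed.

Lemma swp_in s m p i : m \in s -> p \in s -> i \in s -> swp m p i \in s.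
Proof. by rewrite /swp => ms ps is'; case: eqP => // _; case: eqP. Qed.

Lemma sum_swp (W : zmodType) s m p (F : I -> W) : uniq s -> m \in s -> p \in s ->
  \sum_(i <- s) F (swp m p i) = \sum_(i <- s) F i.
Proof.
move=> us ms ps.
case: (eqVneq m p) => [<-|mp].
  by apply: eq_bigr => i _; rewrite /swp; case: eqP => [->|]; rewrite ?eqxx.
have pr : p \in rem m s by rewrite mem_rem_uniq // inE eq_sym mp.
rewrite (big_rem m) // [in RHS](big_rem m) // (big_rem p) // [in RHS](big_rem p) //=.
rewrite /swp eqxx eq_sym (negbTE mp) eqxx addrCA; congr (_ + (_ + _)).
apply: eq_big_seq => i; rewrite mem_rem_uniq ?rem_uniq // inE => /andP[ip].
by rewrite mem_rem_uniq // inE => /andP[im _]; rewrite (negbTE im) (negbTE ip).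
Qed.

Lemma Hmaj_swp s m p d t : uniq s -> m \in s -> p \in s -> Hmaj s d t ->
  Hmaj s d (fun i => t (swp m p i)).
Proof.
move=> us ms ps [H1 H2]; split; first by rewrite (sum_swp t).
by move=> c; rewrite (sum_swp (fun i => pos (t i - c))).
Qed.

Lemma pos_single s m (F : I -> R) : m \in s -> pos (F m) <= \sum_(i <- s) pos (F i).
Proof. by move=> ms; rewrite (big_rem m) //= lerDl sum_pos_ge0. Qed.

Lemma maj_E1 s m d t : Hmaj s d t -> m \in s -> exists p, p \in s /\ d m <= t p.
Proof.
move=> [_ Hh] ms.
have [p [ps _ Hp]] := exists_argmax t (P := xpredT) (ex_intro _ m (conj ms isT)).
exists p; split => //; rewrite leNgt; apply/negP => tpd.
have := Hh (t p).
rewrite [X in _ <= X]big1_seq; last first.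
  by move=> j /andP[_ js]; apply: pos_0; rewrite subr_le0; apply: Hp.
have := pos_single (fun i => d i - t p) ms; rewrite /= pos_id; last by rewrite subr_ge0 ltW.
move: tpd; rewrite -subr_gt0; lra.
Qed.

Lemma ltr_sum_seq s (F G : I -> R) : s != [::] -> (forall i, i \in s -> F i < G i) ->
  \sum_(i <- s) F i < \sum_(i <- s) G i.
Proof.
case: s => [//|a s] _ H; rewrite !big_cons; apply: ltr_leD; first by apply: H; rewrite inE eqxx.
by apply: ler_sum_seq => i ir; apply: ltW; apply: H; rewrite inE ir orbT.
Qed.

Lemma maj_E2 s m p d t : Hmaj s d t -> uniq s -> (forall i, i \in s -> d i <= d m) ->
  p \in s -> d m <= t p -> (1 < size s)%N ->
  exists q, [/\ q \in s, q != p & t q <= d m].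
Proof.
move=> [Hs _] us dmax ps dtp ss.
case: (boolP (has (fun q => (q != p) && (t q <= d m)) s)) => [/hasP [q qs /andP [qp tq]]|hn].
  by exists q.
exfalso; move/hasPn: hn => hn.
have rn : rem p s != [::].
  by rewrite -size_eq0 size_rem //; move: ss; case: (size s) => [|[|]].
have H1 : \sum_(i <- rem p s) d i < \sum_(i <- rem p s) t i.
  apply: ltr_sum_seq => // i; rewrite mem_rem_uniq // inE => /andP [ip is'].
  have := hn i is'; rewrite ip /= -ltNge => H; apply: le_lt_trans H; exact: dmax.
move: Hs; rewrite (big_rem p) // [in X in _ = X](big_rem p) //=.
have := dmax p ps; lra.
Qed.
End Comb2.

Lemma tau_exists (R : realType) (a b x : R) : b <= x -> x <= a ->
  exists tau, [/\ 0 <= tau, tau <= 1 & tau * a + (1 - tau) * b = x].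
Proof.
move=> bx xa; case: (eqVneq a b) => [ab|ab].
  exists 1; split => //; rewrite subrr mul0r addr0 mul1r; apply/eqP; rewrite eq_le xa.
  by rewrite ab bx.
have ba : 0 < a - b by rewrite subr_gt0 lt_neqAle eq_sym ab (le_trans bx xa).
exists ((x - b) / (a - b)); split.
- by apply: divr_ge0; lra.
- by rewrite ler_pdivrMr // mul1r; lra.
- have -> : (x - b) / (a - b) * a + (1 - (x - b) / (a - b)) * b = (x - b) / (a - b) * (a - b) + b.
    by ring.
  by rewrite divfK ?subrK // gt_eqF.
Qed.

Section Block.
Variables (R : realType) (V : lmodType R[i]) (ip : V -> V -> R[i]).
Hypothesis Hip : is_inner_product ip.
Variables (D : V -> Prop) (E : V -> V).
Hypothesis HE : symmetric_operator ip D E.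
Variable I : eqType.

Lemma block (n : nat) : forall (s : seq I) (g : I -> V) (t d : I -> R),
  size s = n -> uniq s -> orthonormal_fam ip g -> (forall i, D (g i)) ->
  (forall i, i \in s -> ip (E (g i)) (g i) = (t i)%:C) -> Hmaj s d t ->
  exists h : I -> V,
   [/\ (forall i, i \notin s -> h i = g i), orthonormal_fam ip h, (forall i, D (h i)),
       (forall i, i \in s -> inspan h s (g i) /\ inspan g s (h i))
     & forall i, i \in s -> ip (E (h i)) (h i) = (d i)%:C].
Proof.
elim: n => [|n IH] s g t d sz us Hg Dg Ht Hm.
  have s0 : s = [::] by apply/eqP; rewrite -size_eq0 sz.
  by exists g; split => //; rewrite s0.
have [m [ms _ dmax]] : exists m, [/\ m \in s, true & forall y, y \in s -> true -> d y <= d m].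
  apply: exists_argmax; case Hs0: s => [|a s']; first by rewrite Hs0 in sz.
  by exists a; rewrite inE eqxx.
have dmax' i : i \in s -> d i <= d m by move=> is'; apply: dmax.
case: (boolP (1 < size s)%N) => ss; last first.
  exists g; split => //.
    by move=> i is'; split; apply: inspan_self.
  clear dmax dmax'; move: sz us Ht Hm ss ms; case: s => [|a [|b r]] //= _ _ Ht [Hs _] _.
  rewrite !big_cons !big_nil !addr0 in Hs.
  by move=> _ i; rewrite inE => /eqP ->; rewrite Hs Ht // inE.
have [p0 [p0s dp0]] := maj_E1 Hm ms.
have [p [ps dp Hp]] := exists_argmin t (P := fun j => d m <= t j) (ex_intro _ p0 (conj p0s dp0)).
have [q0 [q0s q0p tq0]] := maj_E2 Hm us dmax' ps dp ss.
have [q [qs /andP[qp tq] Hq]] := exists_argmax t (P := fun j => (j != p) && (t j <= d m))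
  (ex_intro _ q0 (conj q0s (introT andP (conj q0p tq0)))).
have gap j : j \in s -> j != p -> j != q -> t p <= t j \/ t j <= t q.
  move=> js jp jq; case: (leP (d m) (t j)) => H; first by left; apply: Hp.
  by right; apply: Hq => //; rewrite jp (ltW H).
pose sg := swp m p.
have sgK : involutive sg by apply: swpK.
have sgm : sg m = p by rewrite /sg /swp eqxx.
have sgs i : i \in s -> sg i \in s by move=> is'; apply: swp_in.
pose g1 i := g (sg i).
pose t1 i := t (sg i).
pose q1 := sg q.
have q1s : q1 \in s by apply: sgs.
have q1m : q1 != m.
  apply/eqP => H; move: qp; rewrite -(sgK q) -/q1 H sgm eqxx //.
have sgq1 : sg q1 = q by rewrite /q1 sgK.
have Hm1 : Hmaj s d t1 by apply: Hmaj_swp.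
have gap1 j : j \in s -> j != m -> j != q1 -> t1 m <= t1 j \/ t1 j <= t1 q1.
  move=> js jm jq; rewrite /t1 sgm sgq1; apply: gap; first by apply: sgs.
    by apply/eqP => H; move: jm; rewrite -(sgK j) H -sgm sgK eqxx.
  by apply/eqP => H; move: jq; rewrite -(sgK j) H /q1 eqxx.
have Hg1 : orthonormal_fam ip g1.
  by move=> i k; rewrite /g1 Hg (inj_eq (can_inj sgK)).
have Dg1 i : D (g1 i) by apply: Dg.
have [tau [tau0 tau1 tauv]] := tau_exists tq dp.
have e11 : ip (g1 m) (g1 m) = 1 by rewrite Hg1 eqxx.
have e22 : ip (g1 q1) (g1 q1) = 1 by rewrite Hg1 eqxx.
have e12 : ip (g1 m) (g1 q1) = 0 by rewrite Hg1 eq_sym (negbTE q1m).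
have ea : ip (E (g1 m)) (g1 m) = (t p)%:C by rewrite /g1 sgm Ht.
have eb : ip (E (g1 q1)) (g1 q1) = (t q)%:C by rewrite /g1 sgq1 Ht.
have := rotation Hip HE e11 e22 e12 (Dg1 m) (Dg1 q1) ea eb tau0 tau1.
move=> [al [be [ga [de [al' [be' [ga' [de' [[N11 N22 N12] V1 V2 I1 I2]]]]]]]]].
set v1 := al *: g1 m + be *: g1 q1 in N11 N12 V1 I1 I2.
set v2 := ga *: g1 m + de *: g1 q1 in N22 N12 V2 I1 I2.
have N21 : ip v2 v1 = 0 by rewrite (ipC Hip) N12 conjc0.
have orth_v (a b : R[i]) k : k != m -> k != q1 ->
    ip (a *: g1 m + b *: g1 q1) (g1 k) = 0 /\ ip (g1 k) (a *: g1 m + b *: g1 q1) = 0.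
  move=> km kq.
  have H0 : ip (a *: g1 m + b *: g1 q1) (g1 k) = 0.
    by rewrite (ipDl Hip) !(ipZl Hip) !Hg1 eq_sym (negbTE km) eq_sym (negbTE kq) !mulr0 addr0.
  by split => //; rewrite (ipC Hip) H0 conjc0.
pose g2 i := if i == m then v1 else if i == q1 then v2 else g1 i.
pose t2 i := if i == q1 then t1 m + t1 q1 - d m else t1 i.
have Hm2 : Hmaj (rem m s) d t2.
  apply: residual => //; first by rewrite eq_sym.
  - by rewrite /t1 sgq1.
  - by rewrite /t1 sgm.
have Hg2 : orthonormal_fam ip g2.
  move=> i k; rewrite /g2.
  case: (eqVneq i m) => [->|im]; case: (eqVneq k m) => [km0|km] //.
  - case: (eqVneq k q1) => [_|kq]; first exact: N12.
    by case: (orth_v al be k km kq).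
  - rewrite km0 (negbTE im); case: (eqVneq i q1) => [_|iq]; first exact: N21.
    by case: (orth_v al be i im iq).
  case: (eqVneq i q1) => [->|iq]; case: (eqVneq k q1) => [kq0|kq] //.
  - by case: (orth_v ga de k km kq).
  - by rewrite kq0 (negbTE iq); case: (orth_v ga de i im iq).
have Dv a b : D (a *: g1 m + b *: g1 q1) by apply: (DDZ HE) => //; apply: (DZ HE).
have Dg2 i : D (g2 i) by rewrite /g2; case: ifP => _; [exact: Dv | case: ifP => _; [exact: Dv | exact: Dg1]].
have Ht2 i : i \in rem m s -> ip (E (g2 i)) (g2 i) = (t2 i)%:C.
  rewrite mem_rem_uniq // inE => /andP [im is']; rewrite /g2 /t2 (negbTE im).
  case: (eqVneq i q1) => [_|iq]; first by rewrite V2 /t1 sgm sgq1; congr (_%:C); lra.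
  by rewrite /g1 /t1 Ht //; apply: sgs.
have szr : size (rem m s) = n by rewrite size_rem // sz.
have [h [hout Hh Dh Hsp Hval]] := IH (rem m s) g2 t2 d szr (rem_uniq _ us) Hg2 Dg2 Ht2 Hm2.
have mr : m \notin rem m s by rewrite mem_rem_uniqF.
have hm : h m = v1 by rewrite hout // /g2 eqxx.
have inr i : i \in s -> i != m -> i \in rem m s by move=> is' im; rewrite mem_rem_uniq // inE im.
have g2m : g2 m = v1 by rewrite /g2 eqxx.
have g2q : g2 q1 = v2 by rewrite /g2 (negbTE q1m) eqxx.
have A k : k \in s -> inspan h s (g2 k).
  move=> ks; case: (eqVneq k m) => [->|km].
    by rewrite -hout //; apply: inspan_self.
  by apply: (inspan_rem us ms); case: (Hsp k (inr k ks km)).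
have B k : k \in s -> inspan g2 s (g1 k).
  move=> ks; case: (eqVneq k m) => [->|km].
    rewrite I1; apply: inspan2.
      by rewrite -g2m; apply: inspan_self.
    by rewrite -g2q; apply: inspan_self.
  case: (eqVneq k q1) => [->|kq].
    rewrite I2; apply: inspan2.
      by rewrite -g2m; apply: inspan_self.
    by rewrite -g2q; apply: inspan_self.
  have -> : g1 k = g2 k by rewrite /g2 (negbTE km) (negbTE kq).
  by apply: inspan_self.
have C k : k \in s -> inspan g s (g2 k).
  have Hself j : j \in s -> inspan g s (g1 j) by move=> js; apply: inspan_self => //; apply: sgs.
  move=> ks; rewrite /g2; case: ifP => _; first by apply: inspan2; apply: Hself.
  case: ifP => _; first by apply: inspan2; apply: Hself.
  by apply: Hself.
exists h; split => //.
- move=> i is'.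
  have im : i != m by apply/eqP => H; move: is'; rewrite H ms.
  have iq : i != q1 by apply/eqP => H; move: is'; rewrite H q1s.
  have ip' : i != p by apply/eqP => H; move: is'; rewrite H ps.
  rewrite hout; last by apply/negP => /mem_rem; apply/negP.
  by rewrite /g2 (negbTE im) (negbTE iq) /g1 /sg swp_id.
- move=> i is'; split.
    rewrite -(sgK i); apply: (inspan_trans A); apply: B; exact: sgs.
  apply: (inspan_trans C); case: (eqVneq i m) => [->|im].
    by rewrite hm -g2m; apply: inspan_self.
  by apply: (inspan_rem us ms); case: (Hsp i (inr i is' im)).
- move=> i is'; case: (eqVneq i m) => [->|im]; last by apply: Hval; apply: inr.
  by rewrite hm V1 tauv.
Qed.


End Block.

Section Conv.
Variable R : realType.

Lemma sum_subc (l : seq R) (c : R) :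
  \sum_(x <- l) (x - c) = \sum_(x <- l) x - (size l)%:R * c.
Proof.
elim: l => [|a l IH]; first by rewrite !big_nil mul0r subr0.
by rewrite !big_cons IH /= -addn1 natrD mulrDl mul1r; ring.
Qed.

Lemma sorted_pos (l : seq R) (c : R) : sorted >=%R l ->
  \sum_(x <- l) pos (x - c) = \sum_(x <- take (count (fun x => c < x) l) l) (x - c).
Proof.
elim: l => [|a l IH] /=; first by rewrite !big_nil.
move=> Hp; have Hl := path_sorted Hp.
have Hall : all (fun y => y <= a) l.
  have tr : transitive (>=%R : rel R) by move=> y x z h1 h2; apply: le_trans h2 h1.
  by have := order_path_min tr Hp.
case: (ltP c a) => ca /=.
  by rewrite ?add0n /= !big_cons IH // pos_id // subr_ge0 ltW.
have cnt0 : count (fun x => c < x) l = 0%N.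
  apply/eqP; rewrite -leqn0 leqNgt -has_count; apply/hasPn => y yl.
  by rewrite -leNgt; apply: le_trans ca; move/allP: Hall => /(_ y yl).
rewrite cnt0 /= big_nil big_cons big1_seq ?addr0.
  by apply: pos_0; rewrite subr_le0.
move=> y /andP[_ yl]; apply: pos_0; rewrite subr_le0.
by apply: le_trans ca; move/allP: Hall => /(_ y yl).
Qed.

Lemma majorized_Hmaj (I : eqType) (s : seq I) (d t : I -> R) :
  majorized [seq d i | i <- s] [seq t i | i <- s] -> Hmaj s d t.
Proof.
rewrite /majorized /=.
set a := [seq d i | i <- s]; set b := [seq t i | i <- s].
set a' := sort _ a; set b' := sort _ b.
move=> [Hsz Hsum Hpre].
have tot : total (>=%R : rel R) by move=> x y; apply: le_total.
have sa : sorted >=%R a' by apply: sort_sorted.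
have sb : sorted >=%R b' by apply: sort_sorted.
have pa (F : R -> R) : \sum_(x <- a') F x = \sum_(i <- s) F (d i).
  by rewrite /a' (perm_big _ (permEl (perm_sort _ _))) big_map.
have pb (F : R -> R) : \sum_(x <- b') F x = \sum_(i <- s) F (t i).
  by rewrite /b' (perm_big _ (permEl (perm_sort _ _))) big_map.
split; first by rewrite -(pa id) -(pb id).
move=> c; rewrite -(pa (fun x => pos (x - c))) -(pb (fun x => pos (x - c))).
rewrite sorted_pos //.
set k := count _ a'.
have ka : (k <= size a')%N by apply: count_size.
have sza : size a' = size a by rewrite size_sort.
have szb : size b' = size a by rewrite size_sort Hsz.
have Hk : \sum_(x <- take k a') x <= \sum_(x <- take k b') x.
  case: k ka => [|k] ka; first by rewrite !take0 !big_nil.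
  by apply: Hpre; rewrite -sza ka.
rewrite sum_subc size_takel //.
have -> : \sum_(x <- b') pos (x - c) =
  \sum_(x <- take k b') pos (x - c) + \sum_(x <- drop k b') pos (x - c).
  by rewrite -big_cat cat_take_drop.
apply: le_trans (_ : \sum_(x <- take k b') pos (x - c) <= _); last first.
  by rewrite lerDl; apply: sum_pos_ge0.
apply: le_trans (_ : \sum_(x <- take k b') (x - c) <= _).
  by rewrite sum_subc size_takel ?szb -?sza // lerD2r.
by apply: ler_sum => x _; apply: pos_ge.
Qed.
End Conv.

Section LSpan.
Variables (R : realType) (V : lmodType R[i]) (I : eqType).
Implicit Types (g : I -> V).

Lemma sum_count (W : zmodType) (u s : seq I) (F : I -> W) : uniq u -> {subset s <= u} ->
  \sum_(i <- u) F i *+ count_mem i s = \sum_(i <- s) F i.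
Proof.
move=> uu; elim: s => [|a s IH] sub.
  by rewrite big_nil big1 // => i _; rewrite /= mulr0n.
rewrite big_cons -IH; last by move=> x xs; apply: sub; rewrite inE xs orbT.
have au : a \in u by apply: sub; rewrite inE eqxx.
rewrite -(sum_delta F uu au) -big_split /=; apply: eq_bigr => i _.
by rewrite mulrnDr eq_sym; case: eqP => _; rewrite ?mulr1n ?mulr0n.
Qed.

Lemma lspan_lin g a x y : lspan g x -> lspan g y -> lspan g (a *: x + y).
Proof.
move=> [s1 [c1 ->]] [s2 [c2 ->]].
set u := undup (s1 ++ s2).
have uu : uniq u by apply: undup_uniq.
have sub1 : {subset s1 <= u} by move=> i is1; rewrite mem_undup mem_cat is1.
have sub2 : {subset s2 <= u} by move=> i is2; rewrite mem_undup mem_cat is2 orbT.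
exists u, (fun i => a * (c1 i *+ count_mem i s1) + c2 i *+ count_mem i s2).
rewrite -(sum_count (fun i => c1 i *: g i) uu sub1).
rewrite -(sum_count (fun i => c2 i *: g i) uu sub2).
rewrite scaler_sumr -big_split /=; apply: eq_bigr => i _.
by rewrite scalerDl -scalerA !scalerMnl.
Qed.

Lemma lspan0 g : lspan g 0.
Proof. by exists [::], (fun _ => 0); rewrite big_nil. Qed.

Lemma lspan_self g k : lspan g (g k).
Proof. by exists [:: k], (fun _ => 1); rewrite big_seq1 scale1r. Qed.

Lemma lspan_comb g (T : Type) (s : seq T) (c : T -> R[i]) (u : T -> V) :
  (forall i, lspan g (u i)) -> lspan g (\sum_(i <- s) c i *: u i).
Proof.
move=> H; elim: s => [|a s IH]; first by rewrite big_nil; apply: lspan0.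
by rewrite big_cons; apply: lspan_lin.
Qed.

Lemma inspan_lspan g s x : inspan g s x -> lspan g x.
Proof. by move=> [c ->]; exists s, c. Qed.

End LSpan.

Lemma orth_span (R : realType) (V : lmodType R[i]) (ip : V -> V -> R[i])
  (Hip : is_inner_product ip) (I : eqType) (f : I -> V) (S : seq I) x y :
  inspan f S x -> (forall a, a \in S -> ip (f a) y = 0) -> ip x y = 0.
Proof.
move=> [c ->] H; rewrite (ip_suml Hip) big1_seq // => a /andP[_ aS].
by rewrite (ipZl Hip) H // mulr0.
Qed.

Theorem lemma2p4 (R : realType) (V : lmodType R[i]) (ip : V -> V -> R[i])
  (HV : is_hilbert ip)
  (D : V -> Prop) (E : V -> V) (HE : symmetric_operator ip D E)
  (I : countType) (J : Type) (Ij : J -> {fset I})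
  (d dt : I -> R)
  (Hdisj : forall (j k : J) (i : I), i \in Ij j -> i \in Ij k -> j = k)
  (Hmaj : forall j : J, majorized [seq d i | i <- Ij j] [seq dt i | i <- Ij j])
  (Hout : forall i : I, (forall j : J, i \notin Ij j) -> dt i = d i)
  (f : I -> V) (HfD : forall i : I, D (f i)) (Hf : orthonormal_fam ip f)
  (Hfd : forall i : I, ip (E (f i)) (f i) = (dt i)%:C) :
  exists e : I -> V,
    [/\ orthonormal_fam ip e,
        forall k : I, lspan f (e k),
        forall x : V, cspan ip e x <-> cspan ip f x
      & forall i : I, ip (E (e i)) (e i) = (d i)%:C].
Proof.
have Hip : is_inner_product ip by case: HV.
pose P j (h : I -> V) := [/\ (forall i, i \notin Ij j -> h i = f i), orthonormal_fam ip h,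
   (forall i, D (h i)),
   (forall i, i \in Ij j -> inspan h (Ij j) (f i) /\ inspan f (Ij j) (h i))
 & forall i, i \in Ij j -> ip (E (h i)) (h i) = (d i)%:C].
have Hex j : exists h, P j h.
  exact: (@block _ _ _ Hip _ _ HE _ _ (Ij j) f dt d erefl (fset_uniq _) Hf HfD
            (fun i _ => Hfd i) (majorized_Hmaj (Hmaj j))).
pose H j := proj1_sig (constructive_indefinite_description _ (Hex j)).
have HP j : P j (H j) := proj2_sig (constructive_indefinite_description _ (Hex j)).
pose e i := match excluded_middle_informative (exists j, i \in Ij j) with
  | left ex => H (proj1_sig (constructive_indefinite_description _ ex)) i
  | right _ => f i end.
have eIn j i : i \in Ij j -> e i = H j i.
  move=> ij; rewrite /e; case: excluded_middle_informative => [ex|nex]; last first.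
    by exfalso; apply: nex; exists j.
  by case: constructive_indefinite_description => j' /= ij'; rewrite (Hdisj _ _ _ ij' ij).
have eOut i : (forall j, i \notin Ij j) -> e i = f i.
  move=> H0; rewrite /e; case: excluded_middle_informative => [ex|_] //.
  by exfalso; case: ex => j ij; move: (H0 j); rewrite ij.
have cls i : (exists j, i \in Ij j) \/ (forall j, i \notin Ij j).
  case: (classic (exists j, i \in Ij j)) => [h|nh]; [by left | right].
  by move=> j; apply/negP => ij; apply: nh; exists j.
have Hsp j i : i \in Ij j -> inspan (H j) (Ij j) (f i) /\ inspan f (Ij j) (H j i).
  by case: (HP j) => _ _ _ Hs _; apply: Hs.
have Lf k : lspan f (e k).
  case: (cls k) => [[j kj]|nk]; last by rewrite eOut //; apply: lspan_self.
  by rewrite (eIn j) //; apply: (inspan_lspan (s := Ij j)); case: (Hsp j k kj).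
have Le i : lspan e (f i).
  case: (cls i) => [[j ij]|ni]; last by rewrite -eOut //; apply: lspan_self.
  case: (Hsp j i ij) => [[c ->] _]; exists (Ij j), c.
  by apply: eq_big_seq => a aj; rewrite (eIn j).
have orthf j a y : a \in Ij j -> (forall b, b \in Ij j -> ip (f b) y = 0) -> ip (H j a) y = 0.
  by move=> aj Hb; apply: (orth_span Hip (S := Ij j) (f := f)) => //; case: (Hsp j a aj).
exists e; split.
- move=> i k.
  have Hff a b : a != b -> ip (f a) (f b) = 0 by move=> ab; rewrite Hf (negbTE ab).
  case: (cls i) => [[j ij]|ni]; case: (cls k) => [[j' kj']|nk].
  + rewrite (eIn j) // (eIn j') //.
    case: (classic (j = j')) => [<-|jj]; first by case: (HP j).
    have ik : (i == k) = false.
      by apply/negbTE/eqP => ik; apply: jj; apply: (Hdisj _ _ i) => //; rewrite ik.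
    rewrite ik; apply: (orthf j) => // b bj; rewrite (ipC Hip).
    rewrite (orthf j' k) ?conjc0 // => a aj'; apply: Hff.
    by apply/eqP => ab; apply: jj; apply: (Hdisj _ _ a) => //; rewrite ab.
  + rewrite (eIn j) // (eOut k) //.
    have ik : (i == k) = false by apply/negbTE/eqP => ik; move: (nk j); rewrite -ik ij.
    rewrite ik; apply: (orthf j) => // b bj; apply: Hff.
    by apply/eqP => bk; move: (nk j); rewrite -bk bj.
  + rewrite (eOut i) // (eIn j') //.
    have ik : (i == k) = false by apply/negbTE/eqP => ik; move: (ni j'); rewrite ik kj'.
    rewrite ik (ipC Hip) (orthf j' k) ?conjc0 // => b bj; apply: Hff.
    by apply/eqP => bk; move: (ni j'); rewrite -bk bj.
  + by rewrite (eOut i) // (eOut k).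
- exact: Lf.
- move=> x; split => Hc eps eps0; have [y [Ly Hy]] := Hc eps eps0; exists y; split => //.
    by case: Ly => s [c ->]; apply: lspan_comb.
  by case: Ly => s [c ->]; apply: lspan_comb.
- move=> i; case: (cls i) => [[j ij]|ni].
    by rewrite (eIn j) //; case: (HP j) => _ _ _ _ Hv; apply: Hv.
  by rewrite eOut // Hfd Hout.
Qed.
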